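(* For each of the ranking measures NDCG, MAP and AUC, with binary relevance vectors and top-1 feedback, there is a number of objects $m$ for which the global observability condition fails for the corresponding game: there exist learner actions $\sigma_i,\sigma_j$ with $\ell_i-\ell_j\notin\bigoplus_{k\in[m!]}\mathrm{Col}(S_k^\top)$.
   Context: Objects are $\{1,\dots,m\}$; learner actions are the permutations $\sigma_1,\dots,\sigma_{m!}$ of $[m]$ ($\sigma(i)$ = rank of object $i$, $\sigma^{-1}(j)$ = object at rank $j$); adversary actions are $r_1,\dots,r_{2^m}$ enumerating $\{0,1\}^m$. Measures: $NDCG(\sigma,r)=\frac{1}{Z(r)}\sum_{i=1}^m\frac{r(i)}{\log_2(1+\sigma(i))}$ with $Z(r)=\max_\sigma\sum_{i}\frac{r(i)}{\log_2(1+\sigma(i))}$; $MAP(\sigma,r)=\frac{1}{\|r\|_1}\sum_{i=1}^m\frac{\sum_{j\le i}\mathbb{1}(r(\sigma^{-1}(j))=1)}{i}\mathbb{1}(r(\sigma^{-1}(i))=1)$; $AUC(\sigma,r)=\frac{1}{N(r)}\sum_{i,j}\mathbb{1}(\sigma(i)<\sigma(j))\mathbb{1}(r(i)<r(j))$ with $N(r)=\|r\|_1(m-\|r\|_1)$ (for $r$ with $Z(r)$, $\|r\|_1$ or $N(r)$ zero the measure is taken to be a constant, e.g. $1$ for the gains NDCG, MAP and $0$ for the loss AUC). For a given measure $RL$, the loss (or gain) matrix has entries $L_{i,j}=RL(\sigma_i,r_j)$ with rows $\ell_i$; the feedback matrix has $H_{i,j}=r_j(\sigma_i^{-1}(1))$;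 the signal matrix $S_i\in\{0,1\}^{2\times2^m}$ has $(S_i)_{1,\ell}=\mathbb{1}(H_{i,\ell}=0)$, $(S_i)_{2,\ell}=\mathbb{1}(H_{i,\ell}=1)$. Global observability holds if $\ell_i-\ell_j\in\bigoplus_{k\in[m!]}\mathrm{Col}(S_k^\top)$ for all pairs $i,j$. *)

(* Defs.v *)
From HB Require Import structures.
From mathcomp Require Import all_boot all_order all_algebra all_fingroup.
From mathcomp Require Import reals exp.
Set Implicit Arguments. Unset Strict Implicit. Unset Printing Implicit Defensive.
Import Order.TTheory GRing.Theory Num.Theory.
Local Open Scope ring_scope.

(* Objects are 'I_m (object i here = object i+1 of the paper).
   Learner actions: permutations s : {perm 'I_m}; the rank of object i is
   (s i).+1 (ranks 1..m), and the object at rank j+1 is (s^-1) j.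
   Adversary actions: binary relevance vectors r : {ffun 'I_m -> bool}. *)
Definition relv (m : nat) := {ffun 'I_m -> bool}.

Definition log2 {R : realType} (x : R) : R := ln x / ln 2.

Definition norm1 {R : realType} m (r : relv m) : R := \sum_(i < m) (r i)%:R.

Definition DCG {R : realType} m (s : {perm 'I_m}) (r : relv m) : R :=
  \sum_(i < m) (r i)%:R / log2 ((s i).+2%:R).

(* Z(r) = max_sigma DCG(sigma, r)  (all DCG values are >= 0) *)
Definition Zn {R : realType} m (r : relv m) : R :=
  \big[Num.max/0]_(t : {perm 'I_m}) DCG t r.

Definition NDCG {R : realType} m (s : {perm 'I_m}) (r : relv m) : R :=
  if Zn (R:=R) r == 0 then 1 else DCG s r / Zn (R:=R) r.

Definition MAP {R : realType} m (s : {perm 'I_m}) (r : relv m) : R :=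
  if norm1 (R:=R) r == 0 then 1 else
  (norm1 (R:=R) r)^-1 *
  \sum_(i < m) ((\sum_(j < m | (j <= i)%N) (r ((s^-1)%g j))%:R) / (i.+1)%:R
                 * (r ((s^-1)%g i))%:R).

Definition AUC {R : realType} m (s : {perm 'I_m}) (r : relv m) : R :=
  let N := norm1 (R:=R) r * (m%:R - norm1 (R:=R) r) in
  if N == 0 then 0 else
  N^-1 * \sum_(i < m) \sum_(j < m) ((s i < s j)%N && ~~ r i && r j)%:R.

Definition measure (R : realType) :=
  forall m : nat, {perm 'I_m} -> relv m -> R.

Definition loss_row {R : realType} (RL : measure R) m (s : {perm 'I_m})
  : 'rV[R]_#|relv m| :=
  \row_(j < #|relv m|) RL m s (enum_val j).

Definition feedback n (s : {perm 'I_n.+1}) (r : relv n.+1) : bool :=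
  r ((s^-1)%g ord0).

Definition signal {R : realType} n (s : {perm 'I_n.+1})
  : 'M[R]_(2, #|relv n.+1|) :=
  \matrix_(a < 2, j < #|relv n.+1|)
     (if a == 0 :> nat then ~~ feedback s (enum_val j)
      else feedback s (enum_val j))%:R.

(* Global observability: for all sigma_i, sigma_j, l_i - l_j lies in the sum
   of Col(S_k^T) = row space of S_k, over all k. *)
Definition global_observable {R : realType} (RL : measure R) n : Prop :=
  forall s t : {perm 'I_n.+1},
    (loss_row RL s - loss_row RL t <= \sum_(k : {perm 'I_n.+1}) <<signal (R:=R) k>>)%MS.

(* Main.v *)
Require Import Defs.
From HB Require Import structures.
From mathcomp Require Import all_boot all_order all_algebra all_fingroup.
From mathcomp Require Import reals exp.
From mathcomp Require Import ring lra zify.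
Set Implicit Arguments. Unset Strict Implicit. Unset Printing Implicit Defensive.
Import Order.TTheory GRing.Theory Num.Theory.
Local Open Scope ring_scope.

Section G.
Variable R : realType.
Variable n : nat.
Variables x00 x10 x01 x11 : relv n.+1.
Definition gc (r : relv n.+1) : R :=
  (r == x00)%:R - (r == x10)%:R - (r == x01)%:R + (r == x11)%:R.
Definition cvec : 'cV[R]_#|relv n.+1| := \col_j gc (enum_val j).

Lemma sum_pick (f : relv n.+1 -> R) x : \sum_(r : relv n.+1) f r * (r == x)%:R = f x.
Proof.
rewrite (bigD1 x) //= eqxx mulr1 big1 ?addr0 // => r /negbTE ->; by rewrite mulr0.
Qed.

Lemma rowc p (M : 'M[R]_(p, #|relv n.+1|)) a (f : relv n.+1 -> R)
  (HM : forall j, M a j = f (enum_val j)) :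
  (M *m cvec) a 0 = f x00 - f x10 - f x01 + f x11.
Proof.
rewrite !mxE.
under eq_bigr do rewrite HM !mxE.
rewrite -(big_enum_val (fun r => f r * gc r)) /=.
rewrite /gc.
under eq_bigr do rewrite !(mulrDr, mulrBr).
rewrite !big_split /=.
under [in X in _ + X + _ + _]eq_bigr do rewrite mulrN.
under [in X in _ + X + _]eq_bigr do rewrite mulrN.
by rewrite !sumrN !sum_pick.
Qed.

Hypothesis hfb : forall x, (x00 x + x11 x = x10 x + x01 x)%N.

Lemma signal_ker (k : {perm 'I_n.+1}) : (<<signal (R:=R) k>> <= kermx cvec)%MS.
Proof.
rewrite genmxE sub_kermx; apply/eqP/matrixP => a j; rewrite (ord1 j) [RHS]mxE.
rewrite (@rowc _ _ a (fun r => (if a == 0 :> nat then ~~ feedback k r else feedback k r)%:R));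
  last by move=> j'; rewrite mxE.
rewrite /feedback; have := hfb ((k^-1)%g ord0).
case: (x00 _); case: (x10 _); case: (x01 _); case: (x11 _) => //= _; case: ifP => _ /=; lra.
Qed.

Lemma not_go (RL : measure R) (s t : {perm 'I_n.+1}) :
  let D r := RL _ s r - RL _ t r in
  D x00 - D x10 - D x01 + D x11 != 0 -> ~ global_observable RL n.
Proof.
move=> D HD go; have := go s t.
have Hs : (\sum_(k : {perm 'I_n.+1}) <<signal (R:=R) k>> <= kermx cvec)%MS.
  by apply/sumsmx_subP => k _; exact: signal_ker.
move/submx_trans => /(_ _ _ Hs); rewrite sub_kermx => /eqP /matrixP /(_ 0 0).
rewrite (@rowc _ _ 0 D) ?mxE => [/eqP|j]; first by rewrite (negbTE HD).
by rewrite !mxE.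
Qed.
End G.

Definition o0 : 'I_3 := @Ordinal 3 0 isT.
Definition o1 : 'I_3 := @Ordinal 3 1 isT.
Definition o2 : 'I_3 := @Ordinal 3 2 isT.
Definition r00 : relv 3 := [ffun i => false].
Definition e0 : relv 3 := [ffun i => i == o0].
Definition e2 : relv 3 := [ffun i => i == o2].
Definition e02 : relv 3 := [ffun i => (i == o0) || (i == o2)].
Definition sw : {perm 'I_3} := tperm o0 o1.

Section N.
Variable R : realType.

Lemma log2_ge1 k : 1 <= log2 (R:=R) k.+2%:R.
Proof.
have l2 : 0 < ln (2%:R : R) by apply: ln_gt0; rewrite ltr1n.
rewrite /log2 ler_pdivlMr // mul1r ler_ln ?posrE ?ltr0n // ler_nat; lia.
Qed.

Lemma log2_2 : log2 (R:=R) 2%:R = 1.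
Proof.
have l2 : 0 < ln (2%:R : R) by apply: ln_gt0; rewrite ltr1n.
by rewrite /log2 divff // gt_eqF.
Qed.

Lemma log2_3 : 1 < log2 (R:=R) 3%:R.
Proof.
have l2 : 0 < ln (2%:R : R) by apply: ln_gt0; rewrite ltr1n.
by rewrite /log2 ltr_pdivlMr // mul1r ltr_ln ?posrE ?ltr0n // ?ltr_nat.
Qed.

Lemma DCG_e0 t : DCG (R:=R) t e0 = (log2 (R:=R) (t o0).+2%:R)^-1.
Proof.
rewrite /DCG (bigD1 o0) //= big1 ?addr0 ?ffunE ?eqxx ?div1r // => i.
by rewrite ffunE => /negbTE ->; rewrite mul0r.
Qed.

Lemma Z0 : Zn (R:=R) e0 = 1.
Proof.
apply/eqP; rewrite eq_le; apply/andP; split.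
  apply: bigmax_le => // t _; rewrite DCG_e0 invf_le1 ?log2_ge1 //.
  by apply: lt_le_trans (log2_ge1 _).
by apply: le_trans (le_bigmax _ _ 1%g); rewrite DCG_e0 perm1 log2_2 invr1.
Qed.

Lemma Zr00 : Zn (R:=R) r00 = 0.
Proof.
rewrite /Zn; elim/big_ind: _ => // [x y -> ->|t _]; first by rewrite maxxx.
rewrite /DCG big1 // => i _; by rewrite ffunE mul0r.
Qed.

Lemma Z02 : 1 < Zn (R:=R) e02.
Proof.
apply: lt_le_trans (le_bigmax _ _ 1%g).
rewrite /DCG !big_ord_recr !big_ord0 /= !ffunE ?perm1 /=.
rewrite log2_2 !div1r invr1 mul0r add0r addr0 ltrDl invr_gt0.
by apply: lt_le_trans (log2_ge1 2).
Qed.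

Lemma ndcg_val :
  let D r := @NDCG R _ sw r - @NDCG R _ 1%g r in
  D r00 - D e0 - D e2 + D e02 <> 0.
Proof.
have Zp := Z02.
move=> D; rewrite /D /NDCG Zr00 Z0 eqxx oner_eq0 (gt_eqF (lt_trans ltr01 Zp)).
rewrite /DCG !big_ord_recr !big_ord0 /= !ffunE /sw /tperm !permE ?perm1 /=.
rewrite !(mul0r, add0r, addr0) !div1r log2_2 invr1 !mulr1.
have ha : (log2 (R:=R) 3%:R)^-1 < 1 by rewrite invf_lt1 ?log2_3 // (lt_trans ltr01 log2_3).
move: ha Zp; set a := (log2 (R:=R) 3%:R)^-1; set b := (log2 (R:=R) 4%:R)^-1; set Z := Zn e02.
move=> ha Zp.
have Z0' : Z != 0 by rewrite gt_eqF // (lt_trans ltr01 Zp).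
move=> H; have : (1 - a) * (1 - Z^-1) = 0 by rewrite -H subrr; field.
apply/eqP; rewrite mulf_eq0 negb_or !subr_eq0 eq_sym (lt_eqF ha) /= eq_sym.
by rewrite lt_eqF // invf_lt1 // (lt_trans ltr01 Zp).
Qed.
End N.

Lemma MAPE (R : realType) m s r : @MAP R m s r = if Defs.norm1 (R:=R) r == 0 then 1 else
  (Defs.norm1 (R:=R) r)^-1 *
  \sum_(i < m) ((\sum_(j < m) ((j <= i)%N)%:R * (r ((s^-1)%g j))%:R) / (i.+1)%:R
                 * (r ((s^-1)%g i))%:R).
Proof.
rewrite /MAP; case: ifP => // _; congr (_ * _); apply: eq_bigr => i _.
by rewrite big_mkcond /=; congr (_ / _ * _); apply: eq_bigr => j _; case: ifP; rewrite ?mul0r ?mul1r.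
Qed.

Lemma map_val (R : realType) :
  let D r := @MAP R _ sw r - @MAP R _ 1%g r in
  D r00 - D e0 - D e2 + D e02 = 4^-1.
Proof.
move=> D; rewrite /D !MAPE /Defs.norm1 /sw tpermV invg1.
rewrite !big_ord_recr !big_ord0 /=.
rewrite !ffunE /tperm !permE ?perm1 /=.
rewrite ?(addr0, add0r, mulr0, mul0r, mulr1, mul1r, oner_eq0) /=.
have h2 : ((1 + 1 : R) == 0) = false by rewrite (_ : 1 + 1 = 2%:R) // pnatr_eq0.
rewrite eqxx h2; by field.
Qed.

Definition q0 : 'I_4 := @Ordinal 4 0 isT.
Definition q2 : 'I_4 := @Ordinal 4 2 isT.
Definition q3 : 'I_4 := @Ordinal 4 3 isT.
Definition f00 : relv 4 := [ffun i => false].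
Definition f0 : relv 4 := [ffun i => i == q0].
Definition f2 : relv 4 := [ffun i => i == q2].
Definition f02 : relv 4 := [ffun i => (i == q0) || (i == q2)].
Definition sw4 : {perm 'I_4} := tperm q2 q3.

Lemma auc_val (R : realType) :
  let D r := @AUC R _ sw4 r - @AUC R _ 1%g r in
  D f00 - D f0 - D f2 + D f02 <> 0.
Proof.
rewrite /= /AUC /Defs.norm1.
rewrite !big_ord_recr !big_ord0 /= !ffunE /sw4 /tperm !permE ?perm1 /=.
rewrite !(mul0r, add0r, addr0, mulr0, mulr1, mul1r).
have h3 : (4 - 1 : R) == 0 = false by apply/negbTE/eqP; lra.
have h4 : ((1 + 1) * (4 - (1 + 1)) : R) == 0 = false by apply/negbTE/eqP; lra.
rewrite eqxx h3 h4 => H.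
have : (12 : R)^-1 = 0 by rewrite -oppr0 -H; field.
by apply/eqP; rewrite invr_eq0 pnatr_eq0.
Qed.

Lemma hfb3 (x : 'I_3) : (r00 x + e02 x = e0 x + e2 x)%N.
Proof. by rewrite !ffunE; case: (eqVneq x o0) => [->|] //=; case: (x == o2). Qed.

Lemma hfb4 (x : 'I_4) : (f00 x + f02 x = f0 x + f2 x)%N.
Proof. by rewrite !ffunE; case: (eqVneq x q0) => [->|] //=; case: (x == q2). Qed.

Theorem lemma4 (R : realType) :
  (exists n : nat, ~ global_observable (@NDCG R) n) /\
  (exists n : nat, ~ global_observable (@MAP R) n) /\
  (exists n : nat, ~ global_observable (@AUC R) n).
Proof.
split; [|split].
- exists 2; apply: (@not_go R 2 r00 e0 e2 e02 hfb3 _ sw 1%g); apply/eqP; exact: ndcg_val.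
- exists 2; apply: (@not_go R 2 r00 e0 e2 e02 hfb3 _ sw 1%g); apply/eqP.
  move=> /= H; have E := map_val R; simpl in E; rewrite H in E.
  by move/eqP: E; rewrite eq_sym invr_eq0 pnatr_eq0.
- exists 3; apply: (@not_go R 3 f00 f0 f2 f02 hfb4 _ sw4 1%g); apply/eqP; exact: auc_val.
Qed.
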